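(* Let $n\ge1$ and $N\ge1$ be integers and let $Z_1,\dots,Z_{n+N}$ be independent identically distributed random variables with values in $[0,1]$. Let $\overline X=\frac1n\sum_{k=1}^n Z_k$ and $\overline X'=\frac1{n+N}\sum_{k=1}^{n+N}Z_k$. Define $\varphi(n)=2\left(\frac{1+n/N}{1+\sqrt{n/N}}\right)^2$. Then $\varphi(n)>1.37$, and for every constant $\delta\ge 0$, $$\Pr(\overline X'\le \overline X-\delta)\le 2\exp\!\big(-\varphi(n)\,\delta^2 n\big),\qquad \Pr(\overline X'\ge \overline X+\delta)\le 2\exp\!\big(-\varphi(n)\,\delta^2 n\big).$$
   Context: In the application, $\overline X$ is an arm's current sample mean after $n$ samples, $\overline X'$ its sample mean after $N$ additional samples, and $\delta$ is the gap between the best and another arm's current sample mean (treated as a constant): for the empirically best arm $\alpha$ and second-best arm $\beta$ this bounds $\Pr(\overline X_\alpha'\le\overline X_\beta)$ with $\delta=\overline X_\alpha-\overline X_\beta$, and for another arm $i$ it bounds $\Pr(\overline X_i'\ge \overline X_\alpha)$ with $\delta=\overline X_\alpha-\overline X_i$. *)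

(* Defs.v *)
From HB Require Import structures.
From mathcomp Require Import all_boot all_order all_algebra.
From mathcomp Require Import all_classical all_reals all_analysis.
Set Implicit Arguments. Unset Strict Implicit. Unset Printing Implicit Defensive.
Import Order.TTheory GRing.Theory Num.Theory.
Local Open Scope classical_set_scope.
Local Open Scope ring_scope.

Definition mutually_independent d (T : measurableType d) (R : realType)
  (P : probability T R) (I : finType) (Z : I -> {RV P >-> R}) : Prop :=
  forall (J : {set I}) (B : I -> set R), (forall i, measurable (B i)) ->
    P (\bigcap_(i in [set i | i \in J]) (Z i @^-1` B i)) =
    (\prod_(i in J) P (Z i @^-1` B i))%E.

Definition identically_distributed d (T : measurableType d) (R : realType)
  (P : probability T R) (I : finType) (Z : I -> {RV P >-> R}) : Prop :=
  forall i j, distribution P (Z i) = distribution P (Z j).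

Definition phi (R : realType) (n N : nat) : R :=
  2 * ((1 + n%:R / N%:R) / (1 + Num.sqrt (n%:R / N%:R))) ^+ 2.

Definition Xbar d (T : measurableType d) (R : realType) (P : probability T R)
  (n N : nat) (Z : 'I_(n + N) -> {RV P >-> R}) (t : T) : R :=
  (\sum_(k < n + N | (k < n)%N) Z k t) / n%:R.

Definition Xbar' d (T : measurableType d) (R : realType) (P : probability T R)
  (n N : nat) (Z : 'I_(n + N) -> {RV P >-> R}) (t : T) : R :=
  (\sum_(k < n + N) Z k t) / (n + N)%:R.

(* Main.v *)
Require Import Defs.
From HB Require Import structures.
From mathcomp Require Import all_boot all_order all_algebra.
From mathcomp Require Import all_classical all_reals all_analysis.
From mathcomp Require Import ring lra.
Import Order.TTheory GRing.Theory Num.Theory.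
Import numFieldTopology.Exports numFieldNormedType.Exports.
Local Open Scope classical_set_scope.
Local Open Scope ring_scope.

Section HL.
Variable R : realType.
Variable mu : R.
Hypothesis mu01 : 0 <= mu <= 1.

Let q (x : R) := 1 - mu + mu * expR x.

Let q_gt0 x : 0 < q x.
Proof.
rewrite /q; case/andP: mu01 => m0 m1.
have [->|mp] := eqVneq mu 0; first by rewrite mul0r subr0 addr0.
have : 0 < mu by rewrite lt_def mp.
move=> mp'; apply: (@lt_le_trans _ _ (mu * expR x)).
  by rewrite mulr_gt0 // expR_gt0.
by rewrite lerDr subr_ge0.
Qed.

Let u (x : R) := mu * expR x / q x.
Let w (x : R) := mu + x / 4 - u x.
Let f (x : R) := mu * x + x ^+ 2 / 8 - ln (q x).

Let dq (x : R) : is_derive x (1:R) q (mu * expR x).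
Proof. rewrite /q; apply: is_derive_eq; by rewrite add0r mul1r. Qed.

Let qn0 x : q x != 0. Proof. by rewrite gt_eqF. Qed.

Let du (x : R) : is_derive x (1:R) u (u x - u x ^+ 2).
Proof.
have dV := is_deriveV (qn0 x) (dq x).
rewrite /u; apply: is_derive_eq.
rewrite /GRing.scale /=. have := qn0 x. set Q := q x. move=> Qn. by field.
Qed.


Let dw (x : R) : is_derive x (1:R) w (1/4 - (u x - u x ^+ 2)).
Proof.
have := du x => dux.
rewrite /w; apply: is_derive_eq. rewrite /GRing.scale /=. by field.
Qed.

Let df (x : R) : is_derive x (1:R) f (w x).
Proof.
have dl : is_derive x (1:R) (@ln R \o q) ((q x)^-1 * (mu * expR x)).
  by apply: is_derive1_comp; [apply: is_derive1_ln | apply: dq].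
rewrite /f; apply: is_derive_eq. rewrite /GRing.scale /= /w /u.
by have := qn0 x; set Q := q x => Qn; field.
Qed.

Let contg (g : R -> R) (dg : R -> R) a b :
  (forall x, is_derive x (1:R) g (dg x)) -> {within `[a, b], continuous g}.
Proof.
move=> H; apply/continuous_subspaceT=> r.
apply/differentiable_continuous/derivable1_diffP.
by case: (H r).
Qed.

Let w0 : w 0 = 0.
Proof. by rewrite /w /u /q expR0 mulr1 subrK divr1 mul0r addr0 subrr. Qed.

Let dw_ge0 x : 0 <= 1/4 - (u x - u x ^+ 2).
Proof. have : 0 <= (u x - 1/2) ^+ 2 by apply: sqr_ge0. lra. Qed.

Let wc c : 0 <= w c * c.
Proof.
have [c0|c0|->] := ltgtP c 0; last by rewrite mulr0.
- have [d _ ] := MVT c0 (fun x _ => dw x) (contg _ _ _ _ dw).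
  rewrite w0 sub0r => /eqP; rewrite eqr_oppLR => /eqP ->.
  have := dw_ge0 d; nra.
- have [d _ ] := MVT c0 (fun x _ => dw x) (contg _ _ _ _ dw).
  rewrite w0 subr0 => ->.
  have := dw_ge0 d; nra.
Qed.

Let f0 : f 0 = 0.
Proof. by rewrite /f /q expR0 mulr1 subrK ln1 mulr0 expr0n /= mul0r addr0 subrr. Qed.

Lemma hoeffding_core s : 1 - mu + mu * expR s <= expR (mu * s + s ^+ 2 / 8).
Proof.
suff : 0 <= f s.
  rewrite /f subr_ge0 => H.
  by rewrite -[X in X <= _](@lnK R (q s)) ?ler_expR // posrE.
have [s0|s0|->] := ltgtP s 0; last by rewrite f0.
- have [c ci] := MVT s0 (fun x _ => df x) (contg _ _ _ _ df).
  move: ci; rewrite in_itv /= => /andP[sc c0].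
  rewrite f0 sub0r => /eqP; rewrite eqr_oppLR => /eqP ->.
  have := wc c. nra.
- have [c ci] := MVT s0 (fun x _ => df x) (contg _ _ _ _ df).
  move: ci; rewrite in_itv /= => /andP[c0 cs].
  rewrite f0 subr0 => ->.
  have := wc c. nra.
Qed.
End HL.

Section Disc.
Variable R : realType.

Lemma conv_step (th s : R) : 0 <= th <= 1 -> expR (th * s) <= 1 - th + th * expR s.
Proof.
case/andP=> t0 t1.
have := convex_expR (Itv01 t0 t1) (s : R^o) (0 : R^o).
rewrite !convRE /= mulr0 addr0 expR0 mulr1 => H.
apply: (le_trans H); rewrite /unstable.onem; lra.
Qed.

Lemma hoeff_disc K (q x : 'I_K -> R) (a s : R) :
  (forall k, 0 <= q k) -> \sum_k q k = 1 -> (forall k, a <= x k <= a + 1) ->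
  \sum_k q k * expR (s * x k) <= expR (s * (\sum_k q k * x k) + s ^+ 2 / 8).
Proof.
move=> q0 q1 xa.
have muE : \sum_k q k * x k = \sum_k q k * (x k - a) + a.
  under [X in _ = X + _]eq_bigr do rewrite mulrBr.
  by rewrite sumrB -mulr_suml q1 mul1r subrK.
set mu := \sum_k q k * (x k - a).
have mu01 : 0 <= mu <= 1.
  apply/andP; split.
    by apply: sumr_ge0 => k _; apply: mulr_ge0 => //; have := xa k; lra.
  rewrite -q1; apply: ler_sum => k _.
  have := xa k; have := q0 k; nra.
apply: (@le_trans _ _ (\sum_k q k * (expR (s * a) * (1 - (x k - a) + (x k - a) * expR s)))).
  apply: ler_sum => k _; apply: ler_wpM2l => //.
  have -> : s * x k = s * a + (x k - a) * s by ring.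
  rewrite expRD; apply: ler_wpM2l; first exact: expR_ge0.
  by apply: conv_step; have := xa k; lra.
have -> : \sum_k q k * (expR (s * a) * (1 - (x k - a) + (x k - a) * expR s)) =
   expR (s * a) * (1 - mu + mu * expR s).
  transitivity (\sum_k (expR (s * a) * q k - expR (s * a) * (q k * (x k - a))
      + expR (s * a) * expR s * (q k * (x k - a)))).
    by apply: eq_bigr => k _; ring.
  by rewrite big_split sumrB /= -!mulr_sumr q1 /mu; ring.
rewrite muE.
have -> : s * (mu + a) + s ^+ 2 / 8 = s * a + (mu * s + s ^+ 2 / 8) by ring.
rewrite expRD; apply: ler_wpM2l; first exact: expR_ge0.
exact: hoeffding_core.
Qed.
End Disc.

Section Phi.
Variable R : realType.

Lemma phi_aux (s : R) : 0 <= s ->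
  137/100 < 2 * ((1 + s ^+ 2) / (1 + s)) ^+ 2 /\
  2 * ((1 + s ^+ 2) / (1 + s)) ^+ 2 <= 2 * (1 + s ^+ 2).
Proof.
move=> s0.
have p : 0 < 1 + s by lra.
set y := (1 + s ^+ 2) / (1 + s).
have yE : y * (1 + s) = 1 + s ^+ 2 by rewrite /y divfK // gt_eqF.
split.
  have ya : 207/250 <= y.
    rewrite /y ler_pdivlMr //. have := sqr_ge0 (s - 207/500). nra.
  nra.
have y0 : 0 <= y by rewrite /y divr_ge0 //; nra.
have : y <= 1 + s ^+ 2 by rewrite -yE; nra.
nra.
Qed.
End Phi.

Lemma reidx (X : Type) (idx : X) (op : Monoid.com_law idx) (I : finType) (Q : pred I) (F : I -> X) :
  \big[op/idx]_(v | Q v) F v = \big[op/idx]_(j < #|{: I}| | Q (enum_val j)) F (enum_val j).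
Proof.
by rewrite (reindex (@enum_val I (mem {: I}))) //; apply: onW_bij; apply: enum_val_bij.
Qed.

Section Core.
Variables (R : realType) (d : measure_display) (T : measurableType d).
Variable (P : probability T R).
Variables (n N m : nat) (Z : 'I_(n + N) -> T -> R) (i0 : 'I_(n + N)).
Hypothesis m0 : (0 < m)%N.
Hypothesis HZm : forall i, measurable_fun setT (Z i).
Hypothesis Hind : forall B : 'I_(n + N) -> set R, (forall i, measurable (B i)) ->
  P (\bigcap_(i in [set i | i \in [set: 'I_(n + N)]%SET]) (Z i @^-1` B i)) =
  (\prod_(i in [set: 'I_(n + N)]%SET) P (Z i @^-1` B i))%E.
Hypothesis Hid : forall i j (B : set R), measurable B ->
  P (Z i @^-1` B) = P (Z j @^-1` B).
Hypothesis H01 : forall i t, 0 <= Z i t <= 1.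

Definition cc (i : 'I_(n + N)) : R := if (i < n)%N then N%:R else - n%:R.
Definition bin (k : nat) : set R := `[k%:R / m%:R, k.+1%:R / m%:R[%classic.
Definition xv (i : 'I_(n + N)) (k : nat) : R :=
  if (i < n)%N then k.+1%:R / m%:R else k%:R / m%:R.
Definition Sf (t : T) : R := \sum_i cc i * Z i t.
Definition fT := {ffun 'I_(n + N) -> 'I_m.+1}.
Definition Ev (v : fT) : set T :=
  \bigcap_(i in [set i | i \in [set: 'I_(n + N)]%SET]) (Z i @^-1` bin (v i)).
Definition score (v : fT) : R := \sum_i cc i * xv i (v i).
Definition pr (i : 'I_(n + N)) (k : nat) : R := fine (P (Z i @^-1` bin k)).

Let mpos : 0 < m%:R :> R. Proof. by rewrite ltr0n. Qed.

Lemma bin_meas k : measurable (bin k).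
Proof. exact: measurable_itv. Qed.

Lemma pre_meas i (B : set R) : measurable B -> measurable (Z i @^-1` B).
Proof. by move=> mB; have := HZm i measurableT B mB; rewrite setTI. Qed.

Lemma Ev_meas v : measurable (Ev v).
Proof.
apply: fin_bigcap_measurable; first exact: finite_finset.
by move=> i _; apply: pre_meas; apply: bin_meas.
Qed.

Lemma bin_uniq (k k' : nat) z : bin k z -> bin k' z -> k = k'.
Proof.
rewrite /bin /= !in_itv /= => /andP[a b] /andP[c e].
have h1 : (k < k'.+1)%N.
  by have := le_lt_trans a e; rewrite ltr_pM2r ?invr_gt0 // ltr_nat.
have h2 : (k' < k.+1)%N.
  by have := le_lt_trans c b; rewrite ltr_pM2r ?invr_gt0 // ltr_nat.
by apply/eqP; rewrite eqn_leq -ltnS h1 -ltnS h2.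
Qed.

Definition kof (z : R) : 'I_m.+1 := inord (Num.truncn (z * m%:R)).

Lemma kofP z : 0 <= z <= 1 -> bin (kof z) z.
Proof.
case/andP=> z0 z1.
have zm0 : 0 <= z * m%:R by rewrite mulr_ge0.
have le : (Num.truncn (z * m%:R) <= m)%N.
  rewrite truncn_le_nat; rewrite (@le_lt_trans _ _ m%:R) //; last by rewrite ltr_nat.
  by rewrite ler_piMl.
rewrite /kof inordK ?ltnS //.
have /andP[a b] := truncn_itv zm0.
rewrite /bin /= in_itv /=; apply/andP; split.
  by rewrite ler_pdivrMr.
by rewrite ltr_pdivlMr.
Qed.

Lemma prE i k : P (Z i @^-1` bin k) = (pr i k)%:E.
Proof. by rewrite /pr fineK // fin_num_measure //; apply: pre_meas; apply: bin_meas. Qed.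

Lemma pr_ge0 i k : 0 <= pr i k.
Proof. by rewrite /pr fine_ge0 // measure_ge0. Qed.

Lemma Ev_prob v : P (Ev v) = (\prod_i pr i (v i))%:E.
Proof.
rewrite /Ev Hind; last by move=> i; apply: bin_meas.
rewrite -prodEFin; apply: eq_big => [j|j _]; last exact: prE.
by rewrite finset.in_setT.
Qed.

Lemma pr_sum1 i : \sum_(k < m.+1) pr i k = 1.
Proof.
have tr : trivIset [set: 'I_m.+1] (fun k : 'I_m.+1 => Z i @^-1` bin k).
  move=> k k' _ _ [t [/= h1 h2]]; apply: val_inj; exact: bin_uniq h1 h2.
have := measure_bigsetU_ord P predT (fun k => pre_meas i (bin k) (bin_meas k)) tr.
have -> : \big[setU/set0]_(k < m.+1 | predT k) (Z i @^-1` bin k) = setT.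
  apply/seteqP; split => // t _; rewrite -bigcup_seq_cond.
  exists (kof (Z i t)); first by rewrite /= mem_index_enum.
  exact: kofP.
have e1 : P [set: T] = 1%E by exact: probability_setT.
move=> h; have h2 := etrans (esym h) e1; move: h2.
rewrite (eq_bigr (fun k : 'I_m.+1 => (pr i k)%:E)); last by move=> k _; exact: prE.
by rewrite sumEFin => -[].
Qed.

Lemma union_prob (Q : pred fT) :
  P (\big[setU/set0]_(v | Q v) Ev v) = (\sum_(v | Q v) P (Ev v))%E.
Proof.
rewrite [in LHS]reidx [in RHS]reidx.
apply: measure_bigsetU_ord; first by move=> j; apply: Ev_meas.
move=> j j' _ _ [t [h1 h2]]; apply: enum_val_inj; apply/ffunP => i; apply: val_inj.
exact: bin_uniq (h1 i (finset.in_setT i)) (h2 i (finset.in_setT i)).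
Qed.

Lemma Sf_meas : measurable_fun setT Sf.
Proof.
rewrite /Sf; apply: measurable_sum => i.
by apply: measurable_realfun.measurable_funM => //; apply: measurable_cst.
Qed.

Lemma A_meas (T0 : R) : measurable [set t | T0 <= Sf t].
Proof.
have := Sf_meas measurableT _ (measurable_itv `[T0, +oo[).
rewrite setTI; congr measurable; apply/seteqP; split => t /=; rewrite in_itv /= andbT //.
Qed.

Lemma A_sub (T0 : R) :
  [set t | T0 <= Sf t] `<=` \big[setU/set0]_(v | T0 <= score v) Ev v.
Proof.
move=> t At.
pose v : fT := [ffun i => kof (Z i t)].
have hb i : bin (v i) (Z i t) by rewrite ffunE; exact: kofP.
rewrite -bigcup_seq_cond; exists v; last by move=> i _; exact: hb.
rewrite /= mem_index_enum /=.
apply: (le_trans At); apply: ler_sum => i _.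
have := hb i; rewrite /bin /= in_itv /= => /andP[a b].
rewrite /cc /xv; case: ifP => _.
  by apply: ler_wpM2l => //; apply: ltW.
by rewrite !mulNr lerN2; apply: ler_wpM2l.
Qed.

Lemma core_bound (T0 lam : R) : 0 <= lam ->
  (P [set t | (T0 <= Sf t)%R] <=
   (expR (- (lam * T0)) *
     \prod_i (\sum_(k < m.+1) pr i k * expR (lam * cc i * xv i k)))%:E)%E.
Proof.
move=> l0.
have Um : measurable (\big[setU/set0]_(v | T0 <= score v) Ev v).
  by apply: bigsetU_measurable => v _; exact: Ev_meas.
have h1 : (P [set t | (T0 <= Sf t)%R] <=
   P (\big[setU/set0]_(v | (T0 <= score v)%R) Ev v))%E.
  exact: (le_measure P (mem_set (A_meas T0)) (mem_set Um) (A_sub T0)).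
apply: (le_trans h1).
rewrite (union_prob (fun v => (T0 <= score v)%R)).
rewrite (eq_bigr (fun v : fT => (\prod_i pr i (v i))%:E)); last by move=> v _; exact: Ev_prob.
rewrite sumEFin lee_fin.
rewrite bigA_distr_bigA /= mulr_sumr.
rewrite [X in _ <= X](bigID (fun v : fT => T0 <= score v)) /=.
apply: ler_wpDr.
  apply: sumr_ge0 => v _; apply: mulr_ge0; first exact: expR_ge0.
  by apply: prodr_ge0 => i _; apply: mulr_ge0; [exact: pr_ge0 | exact: expR_ge0].
apply: ler_sum => v Hv.
rewrite big_split /= -expR_sum mulrCA -expRD.
apply: ler_peMr; first by apply: prodr_ge0 => i _; exact: pr_ge0.
rewrite -expR0 ler_expR.
have -> : \sum_i lam * cc i * xv i (v i) = lam * score v.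
  by rewrite /score mulr_sumr; apply: eq_bigr => i _; rewrite mulrA.
rewrite addrC -mulrN -mulrDr; apply: mulr_ge0 => //.
by rewrite subr_ge0.
Qed.

Lemma pr_i0 i k : pr i k = pr i0 k.
Proof. by rewrite /pr (Hid i i0) //; apply: bin_meas. Qed.

Lemma term_bound (lam : R) i :
  \sum_(k < m.+1) pr i k * expR (lam * cc i * xv i k) <=
  expR (lam * cc i * (\sum_(k < m.+1) pr i k * xv i k) + (lam * cc i) ^+ 2 / 8).
Proof.
apply: (@hoeff_disc R m.+1 (fun k : 'I_m.+1 => pr i k) (fun k : 'I_m.+1 => xv i k)
  (if (i < n)%N then 1 / m%:R else 0) (lam * cc i)).
- by move=> k; exact: pr_ge0.
- exact: pr_sum1.
move=> k; have km : (k <= m)%N by rewrite -ltnS.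
have k1 : k%:R / m%:R <= 1 :> R by rewrite ler_pdivrMr // mul1r ler_nat.
have k0 : 0 <= k%:R / m%:R :> R by rewrite divr_ge0.
rewrite /xv; case: ifP => _.
  rewrite -addn1 natrD mulrDl [1%:R]/= ; apply/andP; split.
    by rewrite lerDr.
  by rewrite addrC lerD2l.
by rewrite add0r k0 k1.
Qed.

Lemma prod_bound (lam : R) :
  \prod_i (\sum_(k < m.+1) pr i k * expR (lam * cc i * xv i k)) <=
  expR (lam * (n%:R * N%:R) / m%:R + lam ^+ 2 * (n%:R * N%:R * (n%:R + N%:R)) / 8).
Proof.
apply: (@le_trans _ _ (\prod_i expR (lam * cc i * (\sum_(k < m.+1) pr i k * xv i k)
   + (lam * cc i) ^+ 2 / 8))); last first.
  rewrite -expR_sum ler_expR le_eqVlt; apply/orP; left; apply/eqP.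
  rewrite big_split_ord /=.
  set e0 := \sum_(k < m.+1) pr i0 k * (k%:R / m%:R).
  set e1 := \sum_(k < m.+1) pr i0 k * (k.+1%:R / m%:R).
  have e1E : e1 = e0 + 1 / m%:R.
    rewrite /e1 /e0.
    transitivity (\sum_(k < m.+1) (pr i0 k * (k%:R / m%:R) + pr i0 k * (1 / m%:R))).
      by apply: eq_bigr => k _; rewrite -natr1 mulrDl mulrDr.
    by rewrite big_split /= -mulr_suml pr_sum1 mul1r.
  have L : forall j : 'I_n, lam * cc (lshift N j) *
        (\sum_(k < m.+1) pr (lshift N j) k * xv (lshift N j) k) +
        (lam * cc (lshift N j)) ^+ 2 / 8 = lam * N%:R * e1 + (lam * N%:R) ^+ 2 / 8.
    move=> j; rewrite /cc /xv /= ltn_ord /e1.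
    by congr (_ * _ + _); apply: eq_bigr => k _; rewrite pr_i0.
  have Rr : forall j : 'I_N, lam * cc (rshift n j) *
        (\sum_(k < m.+1) pr (rshift n j) k * xv (rshift n j) k) +
        (lam * cc (rshift n j)) ^+ 2 / 8 = lam * (- n%:R) * e0 + (lam * (- n%:R)) ^+ 2 / 8.
    move=> j; rewrite /cc /xv /= ltnNge leq_addr /= /e0.
    by congr (_ * _ + _); apply: eq_bigr => k _; rewrite pr_i0.
  rewrite (eq_bigr _ (fun j _ => L j)) (eq_bigr _ (fun j _ => Rr j)).
  rewrite !sumr_const !card_ord e1E.
  by field; rewrite pnatr_eq0 -lt0n.
apply: ler_prod => i _; apply/andP; split; last exact: term_bound.
by apply: sumr_ge0 => k _; apply: mulr_ge0; [exact: pr_ge0 | exact: expR_ge0].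
Qed.


Lemma core_final (T0 lam : R) : 0 <= lam ->
  (P [set t | (T0 <= Sf t)%R] <=
   (expR (- (lam * T0) + lam * (n%:R * N%:R) / m%:R +
     lam ^+ 2 * (n%:R * N%:R * (n%:R + N%:R)) / 8))%:E)%E.
Proof.
move=> l0; have h := core_bound T0 lam l0; apply: (le_trans h); rewrite lee_fin.
rewrite -addrA expRD; apply: ler_wpM2l; first exact: expR_ge0.
have hp := prod_bound lam. exact: hp.
Qed.
End Core.




Lemma sum_split_cc (R : realType) (n N : nat) (f : 'I_(n + N) -> R) :
  \sum_i cc R n N i * f i =
  N%:R * \sum_(j < n) f (lshift N j) - n%:R * \sum_(j < N) f (rshift n j).
Proof.
rewrite big_split_ord /= !mulr_sumr -sumrN; congr (_ + _); apply: eq_bigr => j _.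
  by rewrite /cc /= ltn_ord.
by rewrite /cc /= ltnNge leq_addr /= mulNr.
Qed.

Lemma final_num (R : realType) (a b dl ph m : R) :
  0 < a -> 0 < b -> 0 <= dl -> 0 < m -> 8 * dl * a <= m -> ph <= 2 * (1 + a / b) ->
  expR (- (4 * dl / b * (dl * (a * (a + b)))) + 4 * dl / b * (a * b) / m +
     (4 * dl / b) ^+ 2 * (a * b * (a + b)) / 8) <= 2 * expR (- (ph * dl ^+ 2 * a)).
Proof.
move=> a0 b0 d0 m0 dm hp.
have -> : - (4 * dl / b * (dl * (a * (a + b)))) + 4 * dl / b * (a * b) / m +
     (4 * dl / b) ^+ 2 * (a * b * (a + b)) / 8 =
     - (2 * (1 + a / b) * dl ^+ 2 * a) + 4 * dl * a / m.
  by field; apply/andP; split; rewrite gt_eqF.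
have h1 : 4 * dl * a / m <= 1 / 2.
  by rewrite ler_pdivrMr //; lra.
have h2 : ph * dl ^+ 2 * a <= 2 * (1 + a / b) * dl ^+ 2 * a.
  apply: ler_wpM2r; first exact: ltW.
  by apply: ler_wpM2r => //; exact: sqr_ge0.
have e2 : expR (1 / 2) <= 2 :> R.
  have := expR_ge1Dx (- (1 / 2) : R); rewrite expRN => h.
  have p := expR_gt0 (1 / 2 : R).
  have e : (expR (1 / 2 : R))^-1 * expR (1 / 2) = 1 by rewrite mulVf // gt_eqF.
  move: h e p; set y := expR (1 / 2 : R); set w := y^-1; nra.
apply: (@le_trans _ _ (expR (1 / 2) * expR (- (ph * dl ^+ 2 * a)))).
  by rewrite -expRD ler_expR; lra.
by apply: ler_wpM2r => //; exact: expR_ge0.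
Qed.

Lemma ev1 (R : realType) (a b A1 A2 dl : R) : 0 < a -> 0 < b ->
  ((A1 + A2) / (a + b) <= A1 / a - dl) = (dl * (a * (a + b)) <= b * A1 - a * A2).
Proof.
move=> a0 b0.
have ab : 0 < a * (a + b) by apply: mulr_gt0 => //; lra.
have -> : b * A1 - a * A2 = (a * (a + b)) * (A1 / a - (A1 + A2) / (a + b)).
  by field; apply/andP; split; rewrite gt_eqF //; lra.
rewrite [dl * _]mulrC ler_pM2l //; apply/idP/idP => ?; lra.
Qed.

Lemma ev2 (R : realType) (a b A1 A2 dl : R) : 0 < a -> 0 < b ->
  ((A1 + A2) / (a + b) >= A1 / a + dl) = (dl * (a * (a + b)) <= a * A2 - b * A1).
Proof.
move=> a0 b0.
have ab : 0 < a * (a + b) by apply: mulr_gt0 => //; lra.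
have -> : a * A2 - b * A1 = (a * (a + b)) * ((A1 + A2) / (a + b) - A1 / a).
  by field; apply/andP; split; rewrite gt_eqF //; lra.
rewrite [dl * _]mulrC ler_pM2l //; apply/idP/idP => ?; lra.
Qed.

Theorem theorem2 (R : realType) (d : measure_display) (T : measurableType d)
  (P : probability T R) (n N : nat) (Z : 'I_(n + N) -> {RV P >-> R}) :
  (1 <= n)%N -> (1 <= N)%N ->
  mutually_independent Z -> identically_distributed Z ->
  (forall i t, 0 <= Z i t <= 1) ->
  (137 / 100 : R) < phi R n N /\
  (forall delta : R, 0 <= delta ->
     (P [set t | (Xbar' Z t <= Xbar Z t - delta)%R]
        <= (2 * expR (- (phi R n N * delta ^+ 2 * n%:R)))%R%:E)%E /\
     (P [set t | (Xbar' Z t >= Xbar Z t + delta)%R]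
        <= (2 * expR (- (phi R n N * delta ^+ 2 * n%:R)))%R%:E)%E).
Proof.
move=> n1 N1 HI HD H01.
have i0 : 'I_(n + N) := Ordinal (ltn_addr N n1).
have a0 : 0 < n%:R :> R by rewrite ltr0n.
have b0 : 0 < N%:R :> R by rewrite ltr0n.
have [phi1 phi2] : 137/100 < phi R n N /\ phi R n N <= 2 * (1 + n%:R / N%:R).
  rewrite /phi; set s := Num.sqrt (n%:R / N%:R : R).
  have hs : s ^+ 2 = n%:R / N%:R by rewrite sqr_sqrtr // divr_ge0 // ltW.
  rewrite -hs; exact: phi_aux (sqrtr_ge0 _).
split => // dl dl0.
pose Zf (i : 'I_(n + N)) (t : T) : R := Z i t.
have HZm : forall i, measurable_fun setT (Zf i) := fun i => measurable_funPT (Z i).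
have Hind : forall B : 'I_(n + N) -> set R, (forall i, measurable (B i)) ->
    P (\bigcap_(i in [set i | i \in [set: 'I_(n + N)]%SET]) (Zf i @^-1` B i)) =
    (\prod_(i in [set: 'I_(n + N)]%SET) P (Zf i @^-1` B i))%E.
  by move=> B mB; exact: (HI [set: _]%SET B mB).
have Hid : forall i j (B : set R), measurable B -> P (Zf i @^-1` B) = P (Zf j @^-1` B).
  by move=> i j B mB; exact: (congr1 (fun f => f B) (HD i j)).
have H01f i t : 0 <= Zf i t <= 1 := H01 i t.
pose Zg (i : 'I_(n + N)) (t : T) : R := 1 - Zf i t.
have mneg : measurable_fun setT (fun x : R => 1 - x).
  by apply: measurable_realfun.measurable_funB => //; apply: measurable_cst.
have mpre (B : set R) : measurable B -> measurable ((fun x : R => 1 - x) @^-1` B).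
  by move=> mB; have := mneg measurableT _ mB; rewrite setTI.
have HZmg : forall i, measurable_fun setT (Zg i).
  by move=> i; apply: measurable_realfun.measurable_funB => //; apply: measurable_cst.
have Hindg : forall B : 'I_(n + N) -> set R, (forall i, measurable (B i)) ->
    P (\bigcap_(i in [set i | i \in [set: 'I_(n + N)]%SET]) (Zg i @^-1` B i)) =
    (\prod_(i in [set: 'I_(n + N)]%SET) P (Zg i @^-1` B i))%E.
  move=> B mB.
  exact: (Hind (fun i => (fun x : R => 1 - x) @^-1` B i) (fun i => mpre _ (mB i))).
have Hidg : forall i j (B : set R), measurable B -> P (Zg i @^-1` B) = P (Zg j @^-1` B).
  by move=> i j B mB; exact: (Hid i j _ (mpre _ mB)).
have H01g i t : 0 <= Zg i t <= 1.
  by have := H01 i t; rewrite /Zg /Zf => /andP[h1 h2]; apply/andP; split; lra.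
pose m := (Num.truncn (8 * dl * n%:R)).+1.
have m0 : (0 < m)%N by [].
have hm : 8 * dl * n%:R <= m%:R :> R.
  by apply: ltW; apply: truncnS_gt.
pose lam := 4 * dl / N%:R.
have l0 : 0 <= lam by rewrite /lam divr_ge0 // ?mulr_ge0 // ltW.
pose T0 := dl * (n%:R * (n%:R + N%:R)).
have fin := @final_num R n%:R N%:R dl (phi R n N) m%:R a0 b0 dl0 (ltr0n _ _) hm phi2.
have c1 := @core_final R d T P n N m Zf i0 m0 HZm Hind Hid H01f T0 lam l0.
have c2 := @core_final R d T P n N m Zg i0 m0 HZmg Hindg Hidg H01g T0 lam l0.
pose A1 t := \sum_(j < n) Z (lshift N j) t.
pose A2 t := \sum_(j < N) Z (rshift n j) t.
have Sfe t : Sf R d T n N Zf t = N%:R * A1 t - n%:R * A2 t.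
  by rewrite /Sf sum_split_cc.
have Sge t : Sf R d T n N Zg t = n%:R * A2 t - N%:R * A1 t.
  rewrite /Sf sum_split_cc /Zg /Zf !sumrB !sumr_const !card_ord -/(A1 t) -/(A2 t).
  ring.
have Xe t : Xbar Z t = A1 t / n%:R.
  rewrite /Xbar big_mkcond big_split_ord /=.
  rewrite [X in _ + X]big1 ?addr0; last by move=> j _; rewrite /= ltnNge leq_addr.
  by congr (_ / _); apply: eq_bigr => j _; rewrite /= ltn_ord.
have Xe' t : Xbar' Z t = (A1 t + A2 t) / (n%:R + N%:R).
  by rewrite /Xbar' big_split_ord natrD.
have E1 : [set t | (Xbar' Z t <= Xbar Z t - dl)%R] = [set t | (T0 <= Sf R d T n N Zf t)%R].
  by apply: eq_set => t; rewrite Xe Xe' Sfe ev1.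
have E2 : [set t | (Xbar' Z t >= Xbar Z t + dl)%R] = [set t | (T0 <= Sf R d T n N Zg t)%R].
  by apply: eq_set => t; rewrite Xe Xe' Sge ev2.
split.
  rewrite E1; apply: (le_trans c1); rewrite lee_fin; exact: fin.
rewrite E2; apply: (le_trans c2); rewrite lee_fin; exact: fin.
Qed.
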